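(* Let $n \ge 1$ and $t$ be integers with $0 \le t \le n/3$, and assume $n \ge 4$ if $t = 0$. Put $m = n - 3t$. Then the maximum of $\mathrm{mis}(G)$ over all graphs $G$ on $n$ vertices that contain no induced triangle matching of size $t+1$ equals \[ \mathrm{mis}_t(n)=\begin{cases} 3^t\cdot 2^{m/2} & \text{if } m \text{ is even},\\ 3^{t-1}\cdot 2^{(m+3)/2} & \text{if } m \text{ is odd and } t>0,\\ 5\cdot 2^{(n-5)/2} & \text{if } m \text{ is odd and } t=0. \end{cases} \]
   Context: All graphs are finite and simple. For a graph $G$, $\mathrm{mis}(G)$ denotes the number of maximal independent sets of $G$ (independent sets not properly contained in another independent set). An induced triangle matching in $G$ is a set of vertex-disjoint triangles in $G$ whose vertex set induces in $G$ exactly the disjoint union of these triangles (no edges of $G$ between different triangles); its size is the number of triangles. $\mathrm{mis}_t(n)$ is the maximum of $\mathrm{mis}(G)$ over all $n$-vertex graphs $G$ containing no induced triangle matching of size $t+1$. (The case $t=0$ corresponds to triangle-free graphs.) *)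

(* Defs.v *)
From mathcomp Require Import all_boot all_order.
Set Implicit Arguments. Unset Strict Implicit. Unset Printing Implicit Defensive.

Section Graphs.
Variable T : finType.
Variable e : rel T.

Definition simple_graph : Prop := symmetric e /\ irreflexive e.

Definition independent (S : {set T}) : bool :=
  [forall x in S, forall y in S, ~~ e x y].

Definition maximal_independent (S : {set T}) : bool :=
  independent S && [forall x, (x \notin S) ==> ~~ independent (x |: S)].

Definition mis : nat := #|[set S : {set T} | maximal_independent S]|.

Definition triangle (A : {set T}) : bool :=
  (#|A| == 3) && [forall x in A, forall y in A, (x != y) ==> e x y].

Definition induced_triangle_matching (M : {set {set T}}) : bool :=
  [forall A in M, triangle A] &&
  [forall A in M, forall B in M, (A != B) ==>
     [disjoint A & B] && [forall x in A, forall y in B, ~~ e x y]].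

Definition has_induced_triangle_matching (k : nat) : Prop :=
  exists M : {set {set T}}, induced_triangle_matching M /\ #|M| = k.
End Graphs.

Definition mis_t_value (n t : nat) : nat :=
  let m := n - 3 * t in
  if ~~ odd m then 3 ^ t * 2 ^ (m %/ 2)
  else if 0 < t then 3 ^ (t - 1) * 2 ^ ((m + 3) %/ 2)
  else 5 * 2 ^ ((n - 5) %/ 2).

(* Main.v *)
Require Import Defs.
From mathcomp Require Import all_boot all_order.
From mathcomp Require Import zify.
Set Implicit Arguments. Unset Strict Implicit. Unset Printing Implicit Defensive.

Definition gB (n : nat) : nat :=
  if n == 1 then 1 else if n == 3 then 2
  else if odd n then 5 * 2 ^ ((n - 5) %/ 2) else 2 ^ (n %/ 2).
Definition CB (k m : nat) : nat :=
  if ~~ odd m then 3 ^ k * 2 ^ (m %/ 2)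
  else if 0 < k then 3 ^ (k - 1) * 2 ^ ((m + 3) %/ 2) else gB m.
Definition BB (n t : nat) : nat :=
  CB (minn t (n %/ 3)) (n - 3 * minn t (n %/ 3)).

Lemma parity m : (~~ odd m /\ m = 2 * (m %/ 2)) \/ (odd m /\ m = 2 * (m %/ 2) + 1).
Proof. have := modn2 m; case: (odd m) => /= h; [right|left]; split => //; lia. Qed.

Lemma gB_odd m : odd m -> 5 <= m -> gB m = 5 * 2^((m-5)%/2).
Proof.
move=> ho h5; rewrite /gB ho.
have -> : (m == 1) = false by apply/eqP; lia.
by have -> : (m == 3) = false by apply/eqP; lia.
Qed.

Lemma oddS2 m : odd m.+2 = odd m.
Proof. by rewrite /= negbK. Qed.

Lemma C_up2 k m : 2 * CB k m <= CB k m.+2.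
Proof.
rewrite /CB oddS2.
case: (parity m) => [[/negbTE -> hm]|[ho hm]]; rewrite ?ho /=.
  rewrite (_ : m.+2 %/ 2 = (m %/2).+1); last lia.
  by rewrite expnS; lia.
case: k => [|k] /=.
  have [->|h1] := eqVneq m 1; first by [].
  have [->|h3] := eqVneq m 3; first by [].
  rewrite (gB_odd (m := m.+2)); [|by rewrite oddS2|lia].
  rewrite gB_odd //; last lia.
  rewrite (_ : (m.+2 - 5) %/ 2 = ((m - 5) %/2).+1); last lia.
  by rewrite expnS; lia.
rewrite (_ : (m.+2 + 3) %/ 2 = ((m + 3) %/2).+1); last lia.
by rewrite expnS; lia.
Qed.

Lemma C_eq2 k m : ~~ ((k == 0) && (m == 3)) -> CB k m.+2 = 2 * CB k m.
Proof.
move=> hx; rewrite /CB oddS2.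
case: (parity m) => [[/negbTE -> hm]|[ho hm]]; rewrite ?ho /=.
  rewrite (_ : m.+2 %/ 2 = (m %/2).+1); last lia.
  by rewrite expnS; lia.
case: k hx => [|k] /= hx.
  have [->|h1] := eqVneq m 1; first by [].
  have h3 : m != 3 by [].
  rewrite (gB_odd (m := m.+2)); [|by rewrite oddS2|lia].
  rewrite gB_odd //; last lia.
  rewrite (_ : (m.+2 - 5) %/ 2 = ((m - 5) %/2).+1); last lia.
  by rewrite expnS; lia.
rewrite (_ : (m.+2 + 3) %/ 2 = ((m + 3) %/2).+1); last lia.
by rewrite expnS; lia.
Qed.

Lemma C_up3 k m : 3 * CB k m <= CB k.+1 m.
Proof.
rewrite /CB.
case: (parity m) => [[/negbTE -> hm]|[ho hm]]; rewrite ?ho /=.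
  by rewrite expnS; lia.
case: k => [|k] /=; last by rewrite !subn1 /= expnS; lia.
rewrite expn0 mul1n.
have [->|h1] := eqVneq m 1; first by [].
have [->|h3] := eqVneq m 3; first by [].
rewrite gB_odd //; last lia.
rewrite (_ : (m + 3) %/ 2 = ((m - 5) %/2) + 4); last lia.
rewrite expnD; lia.
Qed.

Lemma C_eq3 k m : (0 < k) || ~~ odd m -> CB k.+1 m = 3 * CB k m.
Proof.
rewrite /CB.
case: (parity m) => [[/negbTE -> hm]|[ho hm]]; rewrite ?ho /=.
  by rewrite expnS; lia.
case: k => [|k] //= _.
by rewrite !subn1 /= expnS; lia.
Qed.

Lemma B_reg x t : t <= x %/ 3 -> BB x t = CB t (x - 3 * t).
Proof. by move=> h; rewrite /BB (minn_idPl h). Qed.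

Lemma B_norm x n t : x <= n -> BB x t = BB x (minn t (n %/ 3)).
Proof.
move=> h; rewrite /BB.
have -> : minn (minn t (n %/ 3)) (x %/ 3) = minn t (x %/ 3) by lia.
by [].
Qed.

Lemma B_S1 x t : 1 <= t -> 3 <= x ->
  BB x t = CB (minn t (x %/ 3)) (x - 3 * minn t (x %/ 3)) /\
  BB (x - 3) (t - 1) = CB (minn t (x %/ 3) - 1) (x - 3 * minn t (x %/ 3)).
Proof.
move=> ht hx; split => //; rewrite /BB.
have -> : minn (t - 1) ((x - 3) %/ 3) = minn t (x %/ 3) - 1 by lia.
by have -> : x - 3 - 3 * (minn t (x %/ 3) - 1) = x - 3 * minn t (x %/ 3) by lia.
Qed.

Lemma B_up3 x t : 1 <= t -> 3 <= x -> 3 * BB (x - 3) (t - 1) <= BB x t.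
Proof.
move=> ht hx; case: (B_S1 ht hx) => -> ->.
have hk : 0 < minn t (x %/ 3) by lia.
set k := minn t (x %/ 3); set m := x - 3 * k.
have -> : CB k m = CB (k - 1).+1 m by rewrite subn1 prednK.
by apply: C_up3.
Qed.

Lemma B_eq3 x t : 2 <= t -> 6 <= x -> BB x t = 3 * BB (x - 3) (t - 1).
Proof.
move=> ht hx; have ht1 : 1 <= t by lia.
have hx3 : 3 <= x by lia.
case: (B_S1 ht1 hx3) => -> ->.
have hk : 1 < minn t (x %/ 3) by lia.
set k := minn t (x %/ 3); set m := x - 3 * k.
have -> : CB k m = CB (k - 1).+1 m by rewrite subn1 prednK //; lia.
apply: C_eq3.
by apply/orP; left; lia.
Qed.

Definition lhs (cs : seq (nat * nat)) n t :=
  foldr (fun p acc => p.1 * BB (n - p.2) t + acc) 0 cs.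

Lemma lhs_ext cs n t n' t' c :
  (forall p, p \in cs -> BB (n - p.2) t = c * BB (n' - p.2) t') ->
  lhs cs n t = c * lhs cs n' t'.
Proof.
elim: cs => [|p cs IH] h /=; first by rewrite muln0.
rewrite h ?mem_head // IH; first by rewrite mulnDr mulnCA.
by move=> q hq; apply: h; rewrite in_cons hq orbT.
Qed.

Definition check cs o tm :=
  all (fun n => all (fun t => (o <= n) ==> (tm <= t) ==> (lhs cs n t <= BB n t))
    (iota 0 5)) (iota 0 14).

Lemma frame cs o tm : all (fun p => p.2 <= o) cs -> o <= 5 -> 3 * tm <= o -> tm <= 1 ->
  check cs o tm ->
  forall n t, o <= n -> tm <= t -> lhs cs n t <= BB n t.
Proof.
move=> hcs ho5 htmo htm1 hchk.
have base : forall n t, n <= 13 -> t <= 4 -> o <= n -> tm <= t -> lhs cs n t <= BB n t.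
  move=> n t hn ht hon htm.
  move/allP: hchk => /(_ n); rewrite mem_iota => /(_ (leq_ltn_trans hn (ltnSn _))).
  move/allP => /(_ t); rewrite mem_iota => /(_ (leq_ltn_trans ht (ltnSn _))).
  by rewrite hon htm.
have hoff : forall p, p \in cs -> p.2 <= o by move=> p hp; move/allP: hcs => /(_ p hp).
elim/ltn_ind => n IH t hon htm.
set t' := minn t (n %/ 3).
have -> : lhs cs n t = lhs cs n t'.
  rewrite -[lhs cs n t']mul1n; apply: lhs_ext => p hp; rewrite mul1n.
  by apply: B_norm; apply: leq_subr.
rewrite [BB n t](B_norm t (leqnn n)) -/t'.
have htm' : tm <= t' by rewrite /t'; lia.
have htn : t' <= n %/ 3 by rewrite /t'; lia.
move: t' htm' htn => {htm} t htm htn.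
case: (boolP ((3 * t + 7 <= n) && ((1 <= t) || (14 <= n)))) => [/andP [hA1 hA2]|hA].
  have -> : lhs cs n t = 2 * lhs cs (n - 2) t.
    apply: lhs_ext => p hp.
    have hp5 : p.2 <= 5 by apply: leq_trans (hoff p hp) ho5.
    rewrite B_reg; last lia.
    rewrite B_reg; last lia.
    rewrite (_ : n - p.2 - 3 * t = (n - 2 - p.2 - 3 * t).+2); last lia.
    apply: C_eq2; apply/negP => /andP [/eqP h0 /eqP h3]; lia.
  apply: leq_trans (_ : 2 * BB (n - 2) t <= _).
    by rewrite leq_mul2l /=; apply: IH; lia.
  rewrite B_reg; last lia.
  rewrite B_reg; last lia.
  rewrite (_ : n - 3 * t = (n - 2 - 3 * t).+2); last lia.
  by apply: C_up2.
case: (boolP ((2 <= t) && (11 <= n))) => [/andP [hB1 hB2]|hB].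
  have -> : lhs cs n t = 3 * lhs cs (n - 3) (t - 1).
    apply: lhs_ext => p hp.
    have hp5 : p.2 <= 5 by apply: leq_trans (hoff p hp) ho5.
    rewrite B_eq3; [|lia|lia].
    by rewrite (_ : n - p.2 - 3 = n - 3 - p.2); last lia.
  apply: leq_trans (_ : 3 * BB (n - 3) (t - 1) <= _).
    by rewrite leq_mul2l /=; apply: IH; lia.
  apply: B_up3; lia.
apply: base => //; lia.
Qed.

Lemma B_mono1 n t : BB n t <= BB n.+1 t.
Proof.
have := @frame [:: (1, 1)] 1 0 erefl erefl erefl erefl (ltac:(vm_compute; reflexivity)) n.+1 t erefl erefl.
by rewrite /lhs /= subn1 /= mul1n addn0.
Qed.

Lemma B_mono x y t : x <= y -> BB x t <= BB y t.
Proof.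
elim: y => [|y IH]; first by rewrite leqn0 => /eqP ->.
rewrite leq_eqVlt => /orP [/eqP -> //|h].
by apply: leq_trans (IH h) (B_mono1 _ _).
Qed.

Lemma B_2 n t : 2 <= n -> 2 * BB (n - 2) t <= BB n t.
Proof.
move=> h; have := @frame [:: (2, 2)] 2 0 erefl erefl erefl erefl (ltac:(vm_compute; reflexivity)) n t h erefl.
by rewrite /lhs /= addn0.
Qed.
Lemma B_4 n t : 4 <= n -> 4 * BB (n - 4) t <= BB n t.
Proof.
move=> h; have := @frame [:: (4, 4)] 4 0 erefl erefl erefl erefl (ltac:(vm_compute; reflexivity)) n t h erefl.
by rewrite /lhs /= addn0.
Qed.
Lemma B_5 n t : 5 <= n -> 5 * BB (n - 5) t <= BB n t.
Proof.
move=> h; have := @frame [:: (5, 5)] 5 0 erefl erefl erefl erefl (ltac:(vm_compute; reflexivity)) n t h erefl.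
by rewrite /lhs /= addn0.
Qed.
Lemma B_L3 n t : 4 <= n -> 1 <= t -> 2 * BB (n - 3) t + BB (n - 4) t <= BB n t.
Proof.
move=> h ht; have := @frame [:: (2, 3); (1, 4)] 4 1 erefl erefl erefl erefl (ltac:(vm_compute; reflexivity)) n t h ht.
by rewrite /lhs /= addn0 mul1n.
Qed.
Lemma B_L4 n t : 4 <= n -> BB (n - 3) t + 2 * BB (n - 4) t <= BB n t.
Proof.
move=> h; have := @frame [:: (1, 3); (2, 4)] 4 0 erefl erefl erefl erefl (ltac:(vm_compute; reflexivity)) n t h erefl.
by rewrite /lhs /= addn0 mul1n.
Qed.
Lemma B_L6 n t : 5 <= n -> BB (n - 3) t + 3 * BB (n - 5) t <= BB n t.
Proof.
move=> h; have := @frame [:: (1, 3); (3, 5)] 5 0 erefl erefl erefl erefl (ltac:(vm_compute; reflexivity)) n t h erefl.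
by rewrite /lhs /= addn0 mul1n.
Qed.

Lemma B_deg d n t : d != 2 -> d < n -> d.+1 * BB (n - d.+1) t <= BB n t.
Proof.
elim/ltn_ind: d n => d IH n hd hn.
case: d IH hd hn => [|[|[|[|[|d]]]]] IH hd hn //.
- by rewrite mul1n subn1; have := B_mono1 n.-1 t; rewrite prednK //; lia.
- by apply: B_2.
- by apply: B_4.
- by apply: B_5.
- have h1 : d.+3 != 2 by [].
  have h4 : d.+3 < n by lia.
  have := IH d.+3 (leq_trans (ltnSn _) (leqnSn _)) n h1 h4.
  have h2 : 2 * BB (n - d.+4 - 2) t <= BB (n - d.+4) t by apply: B_2; lia.
  rewrite (_ : n - d.+4 - 2 = n - d.+4.+2) in h2; last lia.
  move=> h3; nia.
Qed.

Lemma ar_tri3 X Y Z : X <= Y -> 3 * Y <= Z -> X + (X + X) <= Z.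
Proof. lia. Qed.
Lemma ar_L3a X1 X2 X3 Y3 Y4 Z : X1 <= Y3 -> X2 <= Y3 -> X3 <= Y4 -> 2 * Y3 + Y4 <= Z -> X1 + (X2 + X3) <= Z.
Proof. lia. Qed.
Lemma ar_L3b X1 X2 X3 Y3 Y4 Z : X1 <= Y3 -> X2 <= Y4 -> X3 <= Y3 -> 2 * Y3 + Y4 <= Z -> X1 + (X2 + X3) <= Z.
Proof. lia. Qed.
Lemma ar_L4 X1 X2 X3 Y3 Y4 Z : X1 <= Y3 -> X2 <= Y4 -> X3 <= Y4 -> Y3 + 2 * Y4 <= Z -> X1 + (X2 + X3) <= Z.
Proof. lia. Qed.
Lemma ar_L4b X1 X2 Y3 Y4 Z : X1 <= Y3 -> X2 <= Y4 -> Y3 + 2 * Y4 <= Z -> X1 + X2 <= Z.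
Proof. lia. Qed.
Lemma ar_L6 X1 X2 X3 X4 Y3 Y5 Z : X1 <= Y3 -> X2 <= Y5 -> X3 <= Y5 -> X4 <= Y5 ->
  Y3 + 3 * Y5 <= Z -> X1 + (X2 + (X3 + X4)) <= Z.
Proof. lia. Qed.


Section G.
Variable T : finType.
Variable e : rel T.
Hypothesis esym : symmetric e.
Hypothesis eirr : irreflexive e.

Definition N x := [set y | e x y].
Definition Nc (V : {set T}) x := x |: (N x :&: V).
Definition deg (V : {set T}) x := #|N x :&: V|.
Definition misV (V : {set T}) : {set {set T}} :=
  [set S : {set T} | [&& S \subset V, independent e S &
     [forall x in V, (x \notin S) ==> [exists y in S, e x y]]]].
Definition tfree t (V : {set T}) := forall M : {set {set T}},
  induced_triangle_matching e M -> (forall A, A \in M -> A \subset V) -> #|M| != t.+1.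

Lemma misVP (V S : {set T}) : reflect [/\ S \subset V, independent e S &
   forall x, x \in V -> x \notin S -> exists2 y, y \in S & e x y] (S \in misV V).
Proof.
rewrite inE; apply: (iffP and3P) => [[h1 h2 /forallP h3]|[h1 h2 h3]]; split => //.
  move=> x xV xS; move: (h3 x); rewrite xV xS /= => /existsP [y /andP [yS exy]].
  by exists y.
apply/forallP => x; apply/implyP => xV; apply/implyP => xS.
by have [y yS exy] := h3 x xV xS; apply/existsP; exists y; rewrite yS.
Qed.

Lemma indepP (S : {set T}) : reflect (forall x y, x \in S -> y \in S -> ~~ e x y) (independent e S).
Proof.
apply: (iffP forallP) => [h x y xS yS|h x].
  by move: (h x); rewrite xS /= => /forallP /(_ y); rewrite yS.
by apply/implyP => xS; apply/forallP => y; apply/implyP => yS; apply: h.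
Qed.

Lemma indep_sub (S S' : {set T}) : S' \subset S -> independent e S -> independent e S'.
Proof.
move=> /subsetP h /indepP hi; apply/indepP => x y xS yS; apply: hi; exact: h.
Qed.

Lemma indepU1 (S : {set T}) x : independent e S -> x \notin S ->
  independent e (x |: S) = ~~ [exists y in S, e x y].
Proof.
move=> /indepP hi xS; apply/indepP/idP.
  move=> h; apply/existsP => [[y /andP [yS exy]]].
  by move: (h x y); rewrite !inE eqxx yS orbT exy => /(_ erefl erefl).
move=> /existsP hne a b; rewrite !inE => /orP [/eqP ->|aS] /orP [/eqP ->|bS].
- by rewrite eirr.
- by apply/negP => exb; apply: hne; exists b; rewrite bS.
- by rewrite esym; apply/negP => exb; apply: hne; exists a; rewrite aS.
- exact: hi.
Qed.

Lemma mis_misV : mis e = #|misV setT|.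
Proof.
rewrite /mis; apply: eq_card => S; rewrite !inE /maximal_independent subsetT /=.
case hi: (independent e S) => //=.
apply/forallP/forallP => h x; move: (h x); rewrite ?in_setT /=.
  by case: (boolP (x \in S)) => xS //=; rewrite indepU1 ?xS // negbK.
by case: (boolP (x \in S)) => xS //=; rewrite indepU1 ?xS // negbK.
Qed.

Lemma class_bound (V A X : {set T}) : (forall x, x \in A -> N x :&: V \subset X) ->
  #|[set S in misV V | S :&: X == A]| <= #|misV (V :\: X)|.
Proof.
move=> hA.
set F := [set S in misV V | S :&: X == A].
have inj : {in F &, injective (fun S => S :\: X)}.
  move=> S1 S2; rewrite !inE => /andP [_ /eqP h1] /andP [_ /eqP h2] h.
  by rewrite -(setID S1 X) -(setID S2 X) h1 h2 h.
rewrite -(card_in_imset inj); apply: subset_leq_card; apply/subsetP => S'.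
move=> /imsetP [S]; rewrite inE => /andP [/misVP [SV Si Sm] /eqP SX] ->.
apply/misVP; split.
- by apply: setSD.
- by apply: indep_sub Si; apply: subsetDl.
move=> x; rewrite !inE => /andP [xX xV] /nandP [|xS].
  by rewrite negbK (negbTE xX).
have [y yS exy] := Sm x xV xS.
exists y => //; rewrite inE yS andbT.
apply/negP => yX.
have yA : y \in A by rewrite -SX inE yS yX.
have := subsetP (hA y yA) x; rewrite !inE esym exy xV => /(_ erefl).
by rewrite (negbTE xX).
Qed.

Lemma branch (V : {set T}) (cls : seq ({set T} * {set T})) :
  (forall p, p \in cls -> forall x, x \in p.1 -> N x :&: V \subset p.2) ->
  (forall S, S \in misV V -> has (fun p => S :&: p.2 == p.1) cls) ->
  #|misV V| <= \sum_(p <- cls) #|misV (V :\: p.2)|.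
Proof.
move=> hc hcov.
suff : forall F : {set {set T}}, F \subset misV V -> (forall S, S \in F -> has (fun p => S :&: p.2 == p.1) cls) ->
  #|F| <= \sum_(p <- cls) #|misV (V :\: p.2)| by apply => // S SV; apply: hcov.
elim: cls hc {hcov} => [|p cls IH] hc F hF hcov.
  suff -> : F = set0 by rewrite cards0.
  by apply/setP => S; rewrite inE; apply/negP => /hcov.
rewrite big_cons.
have -> : F = [set S in F | S :&: p.2 == p.1] :|: [set S in F | S :&: p.2 != p.1].
  by apply/setP => S; rewrite !inE; case: (S \in F); case: (_ == _).
apply: leq_trans (leq_card_setU _ _) _; apply: leq_add.
  apply: leq_trans (class_bound (hc p (mem_head _ _))).
  apply: subset_leq_card; apply/subsetP => S; rewrite inE => /andP [SF hS].
  by rewrite inE (subsetP hF S SF) hS.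
have hc' : forall q, q \in cls -> forall x, x \in q.1 -> N x :&: V \subset q.2.
  by move=> q hq; apply: hc; rewrite in_cons hq orbT.
apply: (IH hc').
- by apply/subsetP => S; rewrite inE => /andP [SF _]; apply: (subsetP hF).
move=> S; rewrite inE => /andP [SF hS]; move: (hcov S SF) => /=.
by rewrite (negbTE hS).
Qed.


Lemma NcE (V : {set T}) u x : (x \in Nc V u) = (x == u) || (e u x && (x \in V)).
Proof. by rewrite !inE. Qed.

Lemma Nc_sub (V : {set T}) u : u \in V -> Nc V u \subset V.
Proof. by move=> uV; apply/subsetP => x; rewrite NcE => /orP [/eqP ->|/andP []]. Qed.

Lemma cardNc (V : {set T}) u : #|Nc V u| = (deg V u).+1.
Proof. by rewrite cardsU1 !inE eirr. Qed.

Lemma capNc (V S : {set T}) u : independent e S -> u \in S -> S :&: Nc V u = [set u].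
Proof.
move=> /indepP hi uS; apply/setP => x; rewrite !inE.
case: (eqVneq x u) => [->|hxu]; first by rewrite uS.
by apply/negP => /andP [xS /andP [eux _]]; move: (hi u x uS xS); rewrite eux.
Qed.

Lemma setI_U1in (S X : {set T}) x : x \in S -> S :&: (x |: X) = x |: (S :&: X).
Proof.
move=> xS; apply/setP => y; rewrite !inE.
by case: (eqVneq y x) => [->|]; rewrite ?xS.
Qed.

Lemma setI_U1out (S X : {set T}) x : x \notin S -> S :&: (x |: X) = S :&: X.
Proof.
move=> xS; apply/setP => y; rewrite !inE.
by case: (eqVneq y x) => [->|]; rewrite ?(negbTE xS).
Qed.

Lemma setI_1in (S : {set T}) x : x \in S -> S :&: [set x] = [set x].
Proof. by move=> xS; apply/setP => y; rewrite !inE; case: (eqVneq y x) => [->|]; rewrite ?xS ?andbF. Qed.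

Lemma setI_1out (S : {set T}) x : x \notin S -> S :&: [set x] = set0.
Proof.
move=> xS; apply/setP => y; rewrite !inE.
by case: (eqVneq y x) => [->|]; rewrite ?(negbTE xS) ?andbF.
Qed.

Lemma card_ge (X : {set T}) (s : seq T) : uniq s -> all (mem X) s -> size s <= #|X|.
Proof.
move=> us /allP hs; rewrite -(card_uniqP us); apply: subset_leq_card.
by apply/subsetP => x xs; apply: hs.
Qed.

Lemma misV_cover (V S : {set T}) v : v \in V -> S \in misV V ->
  v \in S \/ exists2 y, y \in S & y \in N v :&: V.
Proof.
move=> vV /misVP [SV _ Sm]; case: (boolP (v \in S)) => vS; first by left.
right; have [y yS evy] := Sm v vV vS; exists y => //.
by rewrite !inE evy (subsetP SV y yS).
Qed.

Lemma gen_bound (V : {set T}) (us : seq T) :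
  (forall S, S \in misV V -> exists2 u, u \in us & u \in S) ->
  #|misV V| <= \sum_(u <- us) #|misV (V :\: Nc V u)|.
Proof.
move=> hcov.
have := @branch V [seq ([set u], Nc V u) | u <- us].
rewrite big_map; apply.
  move=> p /mapP [u _ ->] x /=; rewrite inE => /eqP ->.
  by apply: subsetUr.
move=> S hS; have [u uus uS] := hcov S hS.
apply/hasP; exists ([set u], Nc V u); first by apply/mapP; exists u.
by move: hS => /misVP [_ Si _] /=; rewrite capNc.
Qed.

Lemma card3 (x y z : T) : x != y -> x != z -> y != z -> #|[set x; y; z]| = 3.
Proof.
move=> nxy nxz nyz.
have -> : [set x; y; z] = [set w in [:: x; y; z]].
  by apply/setP => w; rewrite !inE; case: (w == x); case: (w == y); case: (w == z).
rewrite cardsE; apply/card_uniqP.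
by rewrite /= !inE negb_or nxy nxz nyz.
Qed.

Lemma tri3 x y z : e x y -> e x z -> e y z -> triangle e [set x; y; z].
Proof.
move=> exy exz eyz.
have nxy : x != y by apply/eqP => h; move: exy; rewrite h eirr.
have nxz : x != z by apply/eqP => h; move: exz; rewrite h eirr.
have nyz : y != z by apply/eqP => h; move: eyz; rewrite h eirr.
apply/andP; split.
  by rewrite card3.
apply/forallP => a; apply/implyP => ha; apply/forallP => b; apply/implyP => hb.
apply/implyP => nab.
move: ha hb nab; rewrite !inE -!orbA => /or3P [] /eqP -> /or3P [] /eqP ->;
  rewrite ?eqxx // => _; by rewrite // esym.
Qed.

Lemma tfree0 (V Tr : {set T}) : tfree 0 V -> triangle e Tr -> Tr \subset V -> False.
Proof.
move=> ht tri TV.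
have h1 : induced_triangle_matching e [set Tr].
  apply/andP; split.
    by apply/forallP => A; apply/implyP; rewrite inE => /eqP ->.
  apply/forallP => A; apply/implyP; rewrite inE => /eqP ->.
  by apply/forallP => B; apply/implyP; rewrite inE => /eqP ->; rewrite eqxx.
have h2 : forall A, A \in [set Tr] -> A \subset V by move=> A; rewrite inE => /eqP ->.
by move: (ht _ h1 h2); rewrite cards1.
Qed.

Lemma tfree_sub t (V W : {set T}) : W \subset V -> tfree t V -> tfree t W.
Proof.
move=> WV ht M hM hMW; apply: ht hM _ => A AM.
by apply: subset_trans (hMW A AM) WV.
Qed.

Lemma tfree_remove t (V Tr : {set T}) : triangle e Tr -> Tr \subset V ->
  (forall x y, x \in Tr -> y \in V -> e x y -> y \in Tr) ->
  tfree t.+1 V -> tfree t (V :\: Tr).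
Proof.
move=> tri TV hcl ht M /andP [/forallP htri /forallP hind] hMW.
have TM : Tr \notin M.
  apply/negP => TM; have := hMW Tr TM.
  move: tri => /andP [/eqP c3 _].
  have [x xT] : exists x, x \in Tr by apply/set0Pn; rewrite -card_gt0 c3.
  by move/subsetP => /(_ x xT); rewrite inE xT.
have noedge : forall A x y, A \in M -> x \in Tr -> y \in A -> ~~ e x y.
  move=> A x y AM xT yA; apply/negP => exy.
  have yV : y \in V by have := subsetP (hMW A AM) y yA; rewrite inE => /andP [].
  have := hcl x y xT yV exy.
  by have := subsetP (hMW A AM) y yA; rewrite inE => /andP [/negbTE ->].
apply/negP => /eqP cM.
suff [h1 h2] : induced_triangle_matching e (Tr |: M) /\ (forall A, A \in Tr |: M -> A \subset V).
  by move: (ht _ h1 h2); rewrite cardsU1 TM cM /= eqxx.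
split.
- apply/andP; split.
    apply/forallP => A; apply/implyP; rewrite !inE => /orP [/eqP ->//|AM].
    by move: (htri A); rewrite AM.
  apply/forallP => A; apply/implyP => hA; apply/forallP => B; apply/implyP => hB.
  apply/implyP => nAB.
  move: hA hB nAB; rewrite !inE => /orP [/eqP ->|AM] /orP [/eqP ->|BM].
  + by rewrite eqxx.
  + move=> _; apply/andP; split.
      rewrite -setI_eq0; apply/eqP/setP => x; rewrite !inE; apply/negP => /andP [xT xB].
      by have := subsetP (hMW B BM) x xB; rewrite inE xT.
    apply/forallP => x; apply/implyP => xT; apply/forallP => y; apply/implyP => yB.
    exact: noedge BM xT yB.
  + move=> _; apply/andP; split.
      rewrite -setI_eq0; apply/eqP/setP => x; rewrite !inE; apply/negP => /andP [xA xT].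
      by have := subsetP (hMW A AM) x xA; rewrite inE xT.
    apply/forallP => x; apply/implyP => xA; apply/forallP => y; apply/implyP => yT.
    by rewrite esym; exact: noedge AM yT xA.
  + by move=> nAB; move: (hind A); rewrite AM /= => /forallP /(_ B); rewrite BM nAB.
- move=> A; rewrite !inE => /orP [/eqP ->//|AM].
  by apply: subset_trans (hMW A AM) (subsetDl _ _).
Qed.


Lemma memE (A B : {set T}) x : A = B -> (x \in A) = (x \in B).
Proof. by move=> ->. Qed.

Definition Bnd (V : {set T}) n := forall t' (X : {set T}) k, tfree t' (V :\: X) ->
  X \subset V -> 0 < #|X| -> k <= #|X| -> #|misV (V :\: X)| <= BB (n - k) t'.

Lemma two_elem (A : {set T}) v : #|A| = 2 -> v \in A -> exists2 c, c != v & A = [set v; c].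
Proof.
move=> /eqP /cards2P [x [y [nxy ->]]]; rewrite !inE => /orP [/eqP ->|/eqP ->].
  by exists y => //; rewrite eq_sym.
by exists x => //; apply/setP => z; rewrite !inE orbC.
Qed.

Lemma nbr2 (V : {set T}) a v c : N a :&: V = [set v; c] -> forall y, y \in V -> e a y -> (y == v) || (y == c).
Proof. by move=> h y yV eay; have := memE y h; rewrite !inE eay yV /= => <-. Qed.

Lemma neq_e x y : e x y -> x != y.
Proof. by move=> exy; apply/eqP => h; move: exy; rewrite h eirr. Qed.

Lemma case_tri (V : {set T}) n t v a b : #|V| = n -> tfree t V -> Bnd V n -> v \in V ->
  (forall u, u \in V -> 3 <= #|Nc V u|) -> a != b -> N v :&: V = [set a; b] -> e a b ->
  #|misV V| <= BB n t.
Proof.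
move=> hV ht hsub vV h3 nab hab eab.
have := memE a hab; rewrite !inE eqxx /= => /andP [eva aV].
have := memE b hab; rewrite !inE eqxx orbT /= => /andP [evb bV].
set Tr := [set v; a; b].
have tri : triangle e Tr by apply: tri3.
have TrV : Tr \subset V by apply/subsetP => x; rewrite !inE -!orbA => /or3P [] /eqP ->.
case: t ht => [|t] ht; first by exfalso; apply: tfree0 ht tri TrV.
have cover : forall S, S \in misV V -> exists2 u, u \in [:: v; a; b] & u \in S.
  move=> S hS; case: (misV_cover vV hS) => [vS|[y yS]]; first by exists v; rewrite ?inE ?eqxx.
  by rewrite hab !inE => hy; exists y; rewrite // !inE hy orbT.
apply: leq_trans (gen_bound cover) _; rewrite !big_cons big_nil addn0.
have hF : forall u k, u \in V -> k <= #|Nc V u| -> #|misV (V :\: Nc V u)| <= BB (n - k) t.+1.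
  move=> u k uV hk; apply: hsub => //.
  - by apply: tfree_sub ht; apply: subsetDl.
  - by apply: Nc_sub.
  - by rewrite cardNc.
have n3 : 3 <= n by rewrite -hV -(card3 (neq_e eva) (neq_e evb) (neq_e eab)); apply: subset_leq_card.
case: (boolP ((deg V a <= 2) && (deg V b <= 2))) => [/andP [da db]|hd].
  have hNc : forall x y z, e x y -> e x z -> y != z -> y \in V -> z \in V ->
      deg V x <= 2 -> Nc V x = x |: [set y; z].
    move=> x y z exy exz nyz yV zV dx; congr (_ |: _).
    apply/eqP; rewrite eq_sym eqEcard; apply/andP; split.
      by apply/subsetP => w; rewrite !inE => /orP [] /eqP ->; rewrite ?exy ?exz ?yV ?zV.
    by rewrite cards2 nyz; apply: dx.
  have ENv : Nc V v = Tr.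
    by rewrite /Nc hab; apply/setP => x; rewrite !inE; case: (x == a); case: (x == v); case: (x == b).
  have ENa : Nc V a = Tr.
    rewrite (hNc a v b) //; [|by rewrite esym|by apply: neq_e].
    by apply/setP => x; rewrite !inE; case: (x == a); case: (x == v); case: (x == b).
  have ENb : Nc V b = Tr.
    rewrite (hNc b v a) //; [|by rewrite esym|by rewrite esym|by apply: neq_e].
    by apply/setP => x; rewrite !inE; case: (x == a); case: (x == v); case: (x == b).
  rewrite ENv ENa ENb.
  have hcl : forall x y, x \in Tr -> y \in V -> e x y -> y \in Tr.
    move=> x y xT yV exy.
    have yN : y \in Nc V x by rewrite !inE exy yV orbT.
    have : [|| x == v, x == a | x == b] by move: xT; rewrite !inE -!orbA.
    move=> /or3P [] /eqP hx; move: yN; rewrite hx.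
    - by rewrite ENv.
    - by rewrite ENa.
    - by rewrite ENb.
  have := hsub t Tr 3 (tfree_remove tri TrV hcl ht) TrV.
  rewrite card3 ?(neq_e eva) ?(neq_e evb) ?(neq_e eab) // => /(_ erefl erefl) h.
  have := B_up3 (x := n) (t := t.+1) erefl n3; rewrite subn1 /= => hb; exact: ar_tri3 h hb.
have h3v : forall u, u \in V -> 3 <= #|Nc V u| := h3.
have Fv := hF v 3 vV (h3 v vV).
have Fa3 := hF a 3 aV (h3 a aV).
have Fb3 := hF b 3 bV (h3 b bV).
have := B_L3 (n := n) (t := t.+1) _ erefl.
case: (leqP (deg V a) 2) hd => /= da hd.
  have db : 4 <= #|Nc V b| by rewrite cardNc ltnS ltnNge.
  have Fb4 := hF b 4 bV db.
  have n4 : 4 <= n by rewrite -hV; apply: leq_trans db _; apply: subset_leq_card; apply: Nc_sub.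
  move=> /(_ n4) hb; exact: ar_L3a Fv Fa3 Fb4 hb.

have dA : 4 <= #|Nc V a| by rewrite cardNc.
have Fa4 := hF a 4 aV dA.
have n4 : 4 <= n by rewrite -hV; apply: leq_trans dA _; apply: subset_leq_card; apply: Nc_sub.
move=> /(_ n4) hb; exact: ar_L3b Fv Fa4 Fb3 hb.

Qed.


Lemma Bnd_use (V X : {set T}) n t k : Bnd V n -> tfree t V -> X \subset V -> 0 < k ->
  k <= #|X| -> #|misV (V :\: X)| <= BB (n - k) t.
Proof.
move=> hsub ht XV k0 kX; apply: hsub => //; last by apply: leq_trans kX.
by apply: tfree_sub ht; apply: subsetDl.
Qed.

Lemma indepF (S : {set T}) x y : independent e S -> x \in S -> y \in S -> e x y -> False.
Proof. by move=> /indepP h xS yS exy; move: (h x y xS yS); rewrite exy. Qed.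

Lemma case_ind3 (V : {set T}) n t v a b : #|V| = n -> tfree t V -> Bnd V n -> v \in V ->
  (forall u, u \in V -> 3 <= #|Nc V u|) -> a != b -> N v :&: V = [set a; b] -> ~~ e a b ->
  3 <= deg V a -> #|misV V| <= BB n t.
Proof.
move=> hV ht hsub vV h3 nab hab eab da.
have := memE a hab; rewrite !inE eqxx /= => /andP [eva aV].
have := memE b hab; rewrite !inE eqxx orbT /= => /andP [evb bV].
set cls := [:: ([set v], Nc V v); ([set a], Nc V a); ([set b], a |: Nc V b)].
have hc1 : forall p, p \in cls -> forall x, x \in p.1 -> N x :&: V \subset p.2.
  move=> p; rewrite !in_cons in_nil orbF => /or3P [] /eqP -> x /=; rewrite inE => /eqP ->.
  - by apply: subsetUr.
  - by apply: subsetUr.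
  - by apply: subset_trans (subsetUr _ _) (subsetUr _ _).
have hc2 : forall S, S \in misV V -> has (fun p => S :&: p.2 == p.1) cls.
move=> S hS; have := hS; move=> /misVP [SV Si Sm] /=.
case: (boolP (v \in S)) => vS; first by rewrite capNc // eqxx.
case: (boolP (a \in S)) => aS; first by rewrite (capNc _ Si aS) eqxx orbT.
have bS : b \in S.
  case: (misV_cover vV hS) => [hv|[y yS]]; first by move: vS; rewrite hv.
  rewrite hab !inE => /orP [/eqP hy|/eqP hy]; last by rewrite -hy.
  by move: aS; rewrite -hy yS.
by rewrite setI_U1out // (capNc _ Si bS) eqxx !orbT.
apply: leq_trans (branch hc1 hc2) _; rewrite !big_cons big_nil addn0.
have hNcV : forall u, u \in V -> Nc V u \subset V by move=> u; apply: Nc_sub.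
have F1 := Bnd_use (k := 3) hsub ht (hNcV v vV) erefl (h3 v vV).
have h4a : 4 <= #|Nc V a| by rewrite cardNc.
have F2 := Bnd_use (k := 4) hsub ht (hNcV a aV) erefl h4a.
have anb : a \notin Nc V b by rewrite NcE negb_or nab esym (negbTE eab).
have h4b : 4 <= #|a |: Nc V b| by rewrite cardsU1 anb add1n ltnS; apply: h3.
have sb : a |: Nc V b \subset V.
  by apply/subsetP => x; rewrite in_setU1 => /orP [/eqP -> //|]; apply/subsetP/hNcV.
have F3 := Bnd_use (k := 4) hsub ht sb erefl h4b.
have n4 : 4 <= n by rewrite -hV; apply: leq_trans h4a _; apply: subset_leq_card; apply: hNcV.
have := B_L4 t n4.
move=> hb; exact: ar_L4 F1 F2 F3 hb.

Qed.


Lemma case_ind2 (V : {set T}) n t v a b c d : #|V| = n -> tfree t V -> Bnd V n -> v \in V ->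
  (forall u, u \in V -> 3 <= #|Nc V u|) -> a != b -> N v :&: V = [set a; b] -> ~~ e a b ->
  N a :&: V = [set v; c] -> N b :&: V = [set v; d] -> c != v -> d != v ->
  #|misV V| <= BB n t.
Proof.
move=> hV ht hsub vV h3 nab hab eab hNa hNb ncv ndv.
have := memE a hab; rewrite !inE eqxx /= => /andP [eva aV].
have := memE b hab; rewrite !inE eqxx orbT /= => /andP [evb bV].
have := memE c hNa; rewrite !inE eqxx orbT /= => /andP [eac cV].
have := memE d hNb; rewrite !inE eqxx orbT /= => /andP [ebd dV].
have eav : e a v by rewrite esym.
have ebv : e b v by rewrite esym.
have eca : e c a by rewrite esym.
have edb : e d b by rewrite esym.
have nva : v != a by apply: neq_e.
have nvb : v != b by apply: neq_e.
have nac : a != c by apply: neq_e.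
have nbd : b != d by apply: neq_e.
have nvc : v != c by rewrite eq_sym.
have nvd : v != d by rewrite eq_sym.
have nbc : b != c by apply/eqP => h; move: eab; rewrite h eac.
have nad : a != d by apply/eqP => h; move: eab; rewrite h esym ebd.
have hNcV : forall u, u \in V -> Nc V u \subset V by move=> u; apply: Nc_sub.
have F1 := Bnd_use (k := 3) hsub ht (hNcV v vV) erefl (h3 v vV).
have cov : forall S, S \in misV V -> v \notin S -> (a \in S) || (b \in S).
  move=> S hS vS; case: (misV_cover vV hS) => [hv|[y yS]]; first by move: vS; rewrite hv.
  by rewrite hab !inE => /orP [] /eqP hy; rewrite -hy yS ?orbT.
have need : forall S x y z, S \in misV V -> x \in V -> x \notin S -> N x :&: V = [set y; z] ->
    y \notin S -> z \in S.
  move=> S x y z /misVP [SV _ Sm] xV xS hN yS.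
  have [w wS exw] := Sm x xV xS.
  have := memE w (Logic.eq_sym hN); rewrite !inE exw (subsetP SV w wS) /= => /orP [] /eqP hw.
    by move: yS; rewrite -hw wS.
  by rewrite -hw.
case: (eqVneq c d) => [cd|ncd].
  subst d.
  set X := v |: (a |: (b |: [set c])).
  set cls := [:: ([set v], Nc V v); (a |: [set b], X)].
  have hc1 : forall p, p \in cls -> forall x, x \in p.1 -> N x :&: V \subset p.2.
    move=> p; rewrite !in_cons in_nil orbF => /orP [] /eqP -> x /=.
      by rewrite inE => /eqP ->; apply: subsetUr.
    rewrite !inE => /orP [] /eqP ->; [rewrite hNa|rewrite hNb];
      by apply/subsetP => y; rewrite !inE => /orP [] /eqP ->; rewrite eqxx ?orbT.
  have hc2 : forall S, S \in misV V -> has (fun p => S :&: p.2 == p.1) cls.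
    move=> S hS; have := hS; move=> /misVP [SV Si Sm] /=.
    case: (boolP (v \in S)) => vS; first by rewrite capNc // eqxx.
    have [aS bS] : a \in S /\ b \in S.
      case/orP: (cov S hS vS) => xS.
        split => //; apply/negPn/negP => bS.
        have cS := need S b v c hS bV bS hNb vS.
        by apply: (indepF Si xS cS eac).
      split => //; apply/negPn/negP => aS.
      have cS := need S a v c hS aV aS hNa vS.
      by apply: (indepF Si xS cS ebd).
    have cS : c \notin S by apply/negP => cS; apply: (indepF Si aS cS eac).
    by rewrite /X setI_U1out // setI_U1in // setI_U1in // setI_1out // setU0 eqxx orbT.
  apply: leq_trans (branch hc1 hc2) _; rewrite !big_cons big_nil addn0.
  have XV : X \subset V.
    by apply/subsetP => x; rewrite !inE => /orP [/eqP -> //|/orP [/eqP -> //|/orP [] /eqP -> //]].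
  have h4 : 4 <= #|X|.
    apply: (@card_ge X [:: v; a; b; c]).
      by rewrite /= !inE !negb_or nva nvb nvc nab nac nbc.
    by rewrite /= !inE !eqxx ?orbT.
  have F2 := Bnd_use (k := 4) hsub ht XV erefl h4.
  have n4 : 4 <= n by rewrite -hV; apply: leq_trans h4 _; apply: subset_leq_card.
  have := B_L4 t n4.
  move=> hb; exact: ar_L4b F1 F2 hb.

have ndc : d != c by rewrite eq_sym.
set X2 := v |: (a |: (b |: (c |: [set d]))).
set X3 := Nc V a :|: Nc V d.
set X4 := Nc V b :|: Nc V c.
set cls := [:: ([set v], Nc V v); (a |: [set b], X2); (a |: [set d], X3); (b |: [set c], X4)].
have hc1 : forall p, p \in cls -> forall x, x \in p.1 -> N x :&: V \subset p.2.
  move=> p; rewrite !in_cons in_nil orbF => /or4P [] /eqP -> x /=.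
  - by rewrite inE => /eqP ->; apply: subsetUr.
  - rewrite !inE => /orP [] /eqP ->; [rewrite hNa|rewrite hNb];
      by apply/subsetP => y; rewrite !inE => /orP [] /eqP ->; rewrite eqxx ?orbT.
  - rewrite !inE => /orP [] /eqP ->.
      by apply: subset_trans (subsetUr _ _) (subsetUl _ _).
    by apply: subset_trans (subsetUr _ _) (subsetUr _ _).
  - rewrite !inE => /orP [] /eqP ->.
      by apply: subset_trans (subsetUr _ _) (subsetUl _ _).
    by apply: subset_trans (subsetUr _ _) (subsetUr _ _).
have hc2 : forall S, S \in misV V -> has (fun p => S :&: p.2 == p.1) cls.
  move=> S hS; have := hS; move=> /misVP [SV Si Sm] /=.
  case: (boolP (v \in S)) => vS; first by rewrite capNc // eqxx.
  case: (boolP (a \in S)) => aS; case: (boolP (b \in S)) => bS.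
  - have cS : c \notin S by apply/negP => cS; apply: (indepF Si aS cS eac).
    have dS : d \notin S by apply/negP => dS; apply: (indepF Si bS dS ebd).
    by rewrite /X2 setI_U1out // setI_U1in // setI_U1in // setI_U1out // setI_1out // setU0 eqxx orbT.
  - have dS := need S b v d hS bV bS hNb vS.
    by rewrite /X3 setIUr (capNc _ Si aS) (capNc _ Si dS) eqxx !orbT.
  - have cS := need S a v c hS aV aS hNa vS.
    by rewrite /X4 setIUr (capNc _ Si bS) (capNc _ Si cS) eqxx !orbT.
  - by move: (cov S hS vS); rewrite (negbTE aS) (negbTE bS).
apply: leq_trans (branch hc1 hc2) _; rewrite !big_cons big_nil addn0.
have hu : uniq [:: v; a; b; c; d].
  by rewrite /= !inE !negb_or nva nvb nvc nvd nab nac nad nbc nbd ncd.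
have X2V : X2 \subset V.
  by apply/subsetP => x; rewrite !inE => /orP [/eqP -> //|/orP [/eqP -> //|/orP [/eqP -> //|/orP [] /eqP -> //]]].
have h2 : 5 <= #|X2| by apply: (card_ge hu); rewrite /= !inE !eqxx ?orbT.
have X3V : X3 \subset V by rewrite subUset !hNcV.
have h3' : 5 <= #|X3| by apply: (card_ge hu); rewrite /= !inE !eqxx eav vV edb bV eac cV ?orbT.
have X4V : X4 \subset V by rewrite subUset !hNcV.
have h4 : 5 <= #|X4| by apply: (card_ge hu); rewrite /= !inE !eqxx ebv vV eca aV ebd dV ?orbT.
have F2 := Bnd_use (k := 5) hsub ht X2V erefl h2.
have F3 := Bnd_use (k := 5) hsub ht X3V erefl h3'.
have F4 := Bnd_use (k := 5) hsub ht X4V erefl h4.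
have n5 : 5 <= n by rewrite -hV; apply: leq_trans h2 _; apply: subset_leq_card.
have := B_L6 t n5.
move=> hb; exact: ar_L6 F1 F2 F3 F4 hb.

Qed.


Theorem ub n : forall (V : {set T}) t, #|V| = n -> tfree t V -> #|misV V| <= BB n t.
Proof.
elim/ltn_ind: n => n IH V t hV ht.
have hsub : Bnd V n.
  move=> t' X k ht' XV X0 kX.
  have hc : #|V :\: X| = n - #|X| by rewrite cardsDS // hV.
  have hlt : n - #|X| < n by rewrite -hV; have := subset_leq_card XV; lia.
  apply: leq_trans (IH _ hlt (V :\: X) t' hc ht') _.
  by apply: B_mono; lia.
case: (posnP n) => [n0|npos].
  have V0 : V = set0 by apply/eqP; rewrite -cards_eq0 hV n0.
  have -> : BB n t = 1 by rewrite n0 /BB (_ : minn t (0 %/ 3) = 0) //; lia.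
  rewrite -(cards1 (@set0 T)); apply: subset_leq_card; apply/subsetP => S /misVP [SV _ _].
  by rewrite inE; apply/eqP; apply/eqP; rewrite -subset0 -V0.
have [v0 v0V] : exists v0, v0 \in V by apply/set0Pn; rewrite -card_gt0 hV.
case: (@arg_minnP _ v0 (fun x => x \in V) (deg V) v0V) => v vV hmin.
set d := deg V v.
have hNcv : #|Nc V v| = d.+1 by rewrite cardNc.
have hdeg : forall u, u \in V -> d.+1 <= #|Nc V u| by move=> u uV; rewrite cardNc ltnS; apply: hmin.
case: (eqVneq d 2) => [d2|dn2]; last first.
  have cover : forall S, S \in misV V -> exists2 u, u \in enum (Nc V v) & u \in S.
    move=> S hS; case: (misV_cover vV hS) => [vS|[y yS yN]].
      by exists v; rewrite // mem_enum !inE eqxx.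
    by exists y; rewrite // mem_enum /Nc in_setU1 yN orbT.
  apply: leq_trans (gen_bound cover) _.
  rewrite big_enum /=.
  apply: leq_trans (_ : \sum_(u in Nc V v) BB (n - d.+1) t <= _).
    apply: leq_sum => u uN; have uV : u \in V := subsetP (Nc_sub vV) u uN.
    exact: (@Bnd_use V (Nc V u) n t d.+1 hsub ht (Nc_sub uV) erefl (hdeg u uV)).
  rewrite sum_nat_const hNcv; apply: B_deg => //.
  by rewrite -hV -ltnS -hNcv ltnS; apply: subset_leq_card; apply: Nc_sub.
have h3 : forall u, u \in V -> 3 <= #|Nc V u| by move=> u uV; rewrite -d2; apply: hdeg.
have : #|N v :&: V| == 2 by rewrite -d2.
move=> /cards2P [a [b [nab hab]]].
case: (boolP (e a b)) => eab.
  exact: (case_tri hV ht hsub vV h3 nab hab eab).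
have h2 : forall u, u \in V -> 2 <= deg V u by move=> u uV; rewrite -d2; apply: hmin.
have := memE a hab; rewrite !inE eqxx /= => /andP [eva aV].
have := memE b hab; rewrite !inE eqxx orbT /= => /andP [evb bV].
case: (leqP 3 (deg V a)) => da.
  exact: (case_ind3 hV ht hsub vV h3 nab hab eab da).
have hba : N v :&: V = [set b; a] by rewrite hab; apply/setP => x; rewrite !inE orbC.
case: (leqP 3 (deg V b)) => db.
  have nba : b != a by rewrite eq_sym.
  have eba : ~~ e b a by rewrite esym.
  exact: (case_ind3 hV ht hsub vV h3 nba hba eba db).
have da2 : #|N a :&: V| = 2 by move: (h2 a aV) da; rewrite /deg; clear; lia.
have db2 : #|N b :&: V| = 2 by move: (h2 b bV) db; rewrite /deg; clear; lia.
have vNa : v \in N a :&: V by rewrite !inE esym eva vV.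
have vNb : v \in N b :&: V by rewrite !inE esym evb vV.
have [c ncv hNa] := two_elem da2 vNa.
have [d' ndv hNb] := two_elem db2 vNb.
exact: (case_ind2 hV ht hsub vV h3 nab hab eab hNa hNb ncv ndv).
Qed.

Lemma prod_lb (A B : {set T}) : [disjoint A & B] -> (forall x y, x \in A -> y \in B -> ~~ e x y) ->
  #|misV A| * #|misV B| <= #|misV (A :|: B)|.
Proof.
move=> dAB hAB.
rewrite -cardsX.
have inj : {in setX (misV A) (misV B) &, injective (fun p : {set T} * {set T} => p.1 :|: p.2)}.
  move=> [S1 S2] [S3 S4]; rewrite !in_setX /= => /andP [/misVP [S1A _ _] /misVP [S2B _ _]].
  move=> /andP [/misVP [S3A _ _] /misVP [S4B _ _]] h.
  have hA : forall (X Y : {set T}), X \subset A -> Y \subset B -> (X :|: Y) :&: A = X.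
    move=> X Y XA YB; rewrite setIUl (setIidPl XA).
    suff -> : Y :&: A = set0 by rewrite setU0.
    apply/setP => x; rewrite !inE; apply/negP => /andP [xY xA].
    by move: dAB; rewrite -setI_eq0 => /eqP /setP /(_ x); rewrite !inE xA (subsetP YB x xY).
  have hB : forall (X Y : {set T}), X \subset A -> Y \subset B -> (X :|: Y) :&: B = Y.
    move=> X Y XA YB; rewrite setIUl (setIidPl YB).
    suff -> : X :&: B = set0 by rewrite set0U.
    apply/setP => x; rewrite !inE; apply/negP => /andP [xX xB].
    by move: dAB; rewrite -setI_eq0 => /eqP /setP /(_ x); rewrite !inE xB (subsetP XA x xX).
  by congr pair; [rewrite -(hA S1 S2) // h hA | rewrite -(hB S1 S2) // h hB].
rewrite -(card_in_imset inj); apply: subset_leq_card; apply/subsetP => S.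
move=> /imsetP [[S1 S2]]; rewrite in_setX /= => /andP [/misVP [S1A S1i S1m] /misVP [S2B S2i S2m]] ->.
apply/misVP; split.
- by apply: setUSS.
- apply/indepP => x y; rewrite !inE => /orP [xS|xS] /orP [yS|yS].
  + by move/indepP: S1i; apply.
  + by apply: hAB; [apply: (subsetP S1A)|apply: (subsetP S2B)].
  + by rewrite esym; apply: hAB; [apply: (subsetP S1A)|apply: (subsetP S2B)].
  + by move/indepP: S2i; apply.
- move=> x; rewrite !inE negb_or => /orP [xA|xB] /andP [xS1 xS2].
    by have [y yS ey] := S1m x xA xS1; exists y; rewrite // inE yS.
  by have [y yS ey] := S2m x xB xS2; exists y; rewrite // inE yS orbT.
Qed.

Lemma clique_lb (C : {set T}) : (forall x y, x \in C -> y \in C -> x != y -> e x y) ->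
  #|C| <= #|misV C|.
Proof.
move=> hC.
have inj : injective (fun x : T => [set x]) by move=> x y /set1_inj.
rewrite -(card_imset (mem C) inj); apply: subset_leq_card; apply/subsetP => S.
move=> /imsetP [x xC ->]; apply/misVP; split.
- by rewrite sub1set.
- by apply/indepP => a b; rewrite !inE => /eqP -> /eqP ->; rewrite eirr.
- move=> y yC; rewrite inE => nyx; exists x; first by rewrite inE.
  by apply: hC.
Qed.

End G.


Definition c5adj (i j : nat) := ((i.+1) %% 5 == j) || ((j.+1) %% 5 == i).

Section Con.
Variables (n p r : nat) (c5 : bool).
Hypothesis hn : n = (if c5 then 5 else 3 * p) + 2 * r.

Definition sB := if c5 then 5 else 3 * p.
Definition nb0 := if c5 then 1 else p.
Definition bid (i : nat) := if i < sB then (if c5 then 0 else i %/ 3) else nb0 + (i - sB) %/ 2.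
Definition inC5 (i : nat) := c5 && (i < 5).
Definition adjN (i j : nat) := [&& i != j, bid i == bid j & ~~ inC5 i || c5adj i j].
Definition eG : rel 'I_n := fun x y => adjN x y.

Lemma bid_C5 i : c5 -> (bid i == 0) = (i < 5).
Proof. by rewrite /bid /sB /nb0 => ->; case: (ltnP i 5). Qed.

Lemma inC5_eq i j : bid i = bid j -> inC5 i = inC5 j.
Proof.
rewrite /inC5; case hc: c5 => //= h.
by rewrite -!bid_C5 // h.
Qed.

Lemma c5adj_sym i j : c5adj i j = c5adj j i.
Proof. by rewrite /c5adj orbC. Qed.

Lemma eG_sym : symmetric eG.
Proof.
move=> x y; rewrite /eG /adjN.
case: (eqVneq (bid x) (bid y)) => [h|h].
  by rewrite (inC5_eq h) c5adj_sym eq_sym.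
by rewrite !andbF.
Qed.

Lemma eG_irr : irreflexive eG.
Proof. by move=> x; rewrite /eG /adjN eqxx. Qed.

Lemma eG_bid x y : eG x y -> bid x = bid y.
Proof. by rewrite /eG /adjN => /and3P [_ /eqP -> _]. Qed.

Definition Blk b := [set x : 'I_n | bid x == b].
Definition U q := [set x : 'I_n | bid x < q].

Definition lbv b := if c5 then (if b == 0 then 5 else 2) else (if b < p then 3 else 2).


Lemma card_vals_le (s : seq nat) (A : {set 'I_n}) : (forall x, x \in A -> val x \in s) -> #|A| <= size s.
Proof.
move=> h; rewrite cardE -(size_map val); apply: uniq_leq_size.
  by rewrite (map_inj_uniq val_inj) enum_uniq.
by move=> i /mapP [x]; rewrite mem_enum => xA ->; apply: h.
Qed.

Lemma card_vals_ge (s : seq nat) (A : {set 'I_n}) : uniq s ->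
  (forall i, i \in s -> exists2 x, x \in A & val x = i) -> size s <= #|A|.
Proof.
move=> us h; rewrite cardE -(size_map val); apply: uniq_leq_size => // i /h [x xA <-].
by apply/mapP; exists x; rewrite ?mem_enum.
Qed.

Lemma bid_lt_sB i : i < sB -> bid i < nb0.
Proof. rewrite /bid /sB /nb0; case: c5 => h; rewrite h //; lia. Qed.

Lemma bid_ge_sB i : sB <= i -> bid i = nb0 + (i - sB) %/ 2.
Proof. by rewrite /bid => h; rewrite ltnNge h. Qed.

Lemma blk_clique b : ~~ (c5 && (b == 0)) ->
  forall x y, x \in Blk b -> y \in Blk b -> x != y -> eG x y.
Proof.
move=> hb x y; rewrite !inE => /eqP hx /eqP hy nxy.
rewrite /eG /adjN nxy hx hy eqxx /=.
apply/orP; left; rewrite /inC5; apply/negP => /andP [hc x5].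
by move: hb; rewrite hc -hx /= bid_C5 // x5.
Qed.

Lemma n_ge : sB + 2 * r = n.
Proof. by rewrite hn /sB. Qed.

Lemma blk_card b : b < nb0 + r -> ~~ (c5 && (b == 0)) -> lbv b <= #|Blk b|.
Proof.
move=> hbr hb; have hn' := n_ge.
case: (boolP (~~ c5 && (b < p))) => [/andP [hc bp]|hcb].
  have -> : lbv b = size [:: 3 * b; 3 * b + 1; 3 * b + 2] by rewrite /lbv (negbTE hc) bp.
  apply: card_vals_ge; first by rewrite /= !inE; apply/and3P; split => //; lia.
  move=> i; rewrite !inE => hi.
  have hin : i < n by move: hn'; rewrite /sB (negbTE hc); lia.
  exists (Ordinal hin) => //; rewrite inE /= /bid /sB /nb0 (negbTE hc).
  have -> : i < 3 * p by lia.
  apply/eqP; lia.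
have hge : nb0 <= b.
  move: hb hcb; rewrite /nb0; case: c5 => /=; lia.
have -> : lbv b = size [:: sB + 2 * (b - nb0); sB + 2 * (b - nb0) + 1].
  by rewrite /lbv; move: hb hcb hge; rewrite /nb0; case: c5 => /=; case: (b == 0); case: (b < p) => //; lia.
apply: card_vals_ge; first by rewrite /= !inE; lia.
move=> i; rewrite !inE => hi.
have hin : i < n by rewrite -hn'; lia.
exists (Ordinal hin) => //; rewrite inE /=.
rewrite bid_ge_sB; last lia.
apply/eqP; lia.
Qed.

Lemma c5_nonadj i : i < 5 -> ~~ c5adj i ((i + 2) %% 5) && ~~ c5adj ((i + 2) %% 5) i.
Proof. by case: i => [|[|[|[|[|i]]]]]. Qed.

Lemma c5_cover i j : i < 5 -> j < 5 -> j != i -> j != (i + 2) %% 5 ->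
  c5adj j i || c5adj j ((i + 2) %% 5).
Proof. by case: i => [|[|[|[|[|i]]]]] //; case: j => [|[|[|[|[|j]]]]]. Qed.

Lemma c5_notri i j k : i < 5 -> j < 5 -> k < 5 -> i != j -> i != k -> j != k ->
  c5adj i j -> c5adj i k -> c5adj j k -> False.
Proof.
by case: i => [|[|[|[|[|i]]]]] //; case: j => [|[|[|[|[|j]]]]] //; case: k => [|[|[|[|[|k]]]]].
Qed.

Definition Sx (i : nat) := [set x : 'I_n | (val x == i) || (val x == (i + 2) %% 5)].

Lemma adjC5 (x y : 'I_n) : c5 -> x < 5 -> y < 5 -> eG x y = (x != y) && c5adj x y.
Proof.
move=> hc hx hy; rewrite /eG /adjN /inC5 hc hx /=.
have /eqP -> : bid x == 0 by rewrite bid_C5.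
by have /eqP -> : bid y == 0 by rewrite bid_C5.
Qed.

Lemma Sx_mis i : c5 -> i < 5 -> Sx i \in misV eG (Blk 0).
Proof.
move=> hc hi; have hn5 : 5 <= n by rewrite hn hc; lia.
have i2 : (i + 2) %% 5 < 5 by apply: ltn_pmod.
have hS : forall x : 'I_n, x \in Sx i -> x < 5.
  by move=> x; rewrite inE => /orP [] /eqP ->.
apply/misVP; split.
- by apply/subsetP => x xS; rewrite inE bid_C5 // hS.
- apply/indepP => x y xS yS; rewrite adjC5 ?hS //.
  case: (eqVneq x y) => [->|nxy]; first by []. 
  have /andP [n1 n2] := c5_nonadj hi.
  move: xS yS; rewrite !inE => /orP [] /eqP hx /orP [] /eqP hy.
  + by move: nxy; rewrite -val_eqE hx hy eqxx.
  + by rewrite hx hy (negbTE n1) andbF.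
  + by rewrite hx hy (negbTE n2) andbF.
  + by move: nxy; rewrite -val_eqE hx hy eqxx.
- move=> x; rewrite inE bid_C5 // => hx; rewrite inE negb_or => /andP [h1 h2].
  have := c5_cover hi hx h1 h2.
  case hk : (c5adj x i) => /= hk2.
    have hin : i < n by lia.
    exists (Ordinal hin); first by rewrite inE eqxx.
    by rewrite adjC5 //= hk andbT.
  have hin : (i + 2) %% 5 < n by lia.
  exists (Ordinal hin); first by rewrite inE eqxx orbT.
  by rewrite adjC5 //= hk2 andbT.
Qed.

Lemma Sx_inj i j : c5 -> i < 5 -> j < 5 -> Sx i = Sx j -> i = j.
Proof.
move=> hc hi hj h; have hn5 : 5 <= n by rewrite hn hc; lia.
have hin : i < n by lia.
have hjn : j < n by lia.
have := memE (Ordinal hin) h; rewrite !inE /= eqxx /= => /esym /orP [/eqP //|/eqP h1].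
have := memE (Ordinal hjn) h; rewrite !inE /= eqxx /= => /orP [/eqP -> //|/eqP h2].
lia.
Qed.

Lemma c5_blk : c5 -> 5 <= #|misV eG (Blk 0)|.
Proof.
move=> hc.
have inj : injective (fun i : 'I_5 => Sx i).
  by move=> i j /Sx_inj h; apply: val_inj; apply: h.
have := card_imset (mem [set: 'I_5]) inj; rewrite cardsT card_ord => <-.
apply: subset_leq_card; apply/subsetP => S /imsetP [i _ ->].
exact: Sx_mis.
Qed.

Lemma blk_mis b : b < nb0 + r -> lbv b <= #|misV eG (Blk b)|.
Proof.
move=> hbr; case: (boolP (c5 && (b == 0))) => [/andP [hc /eqP ->]|hb].
  by rewrite /lbv hc /=; exact: c5_blk.
apply: leq_trans (blk_card hbr hb) _.
exact: (clique_lb eG_irr (blk_clique hb)).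
Qed.

Lemma U_prod q : q <= nb0 + r -> \prod_(b < q) lbv b <= #|misV eG (U q)|.
Proof.
elim: q => [|q IH] hq.
  rewrite big_ord0 card_gt0; apply/set0Pn; exists set0; apply/misVP; split.
  - by apply: sub0set.
  - by apply/indepP => x y; rewrite inE.
  - by move=> x; rewrite inE.
rewrite big_ord_recr /=.
have -> : U q.+1 = U q :|: Blk q.
  by apply/setP => x; rewrite !inE ltnS leq_eqVlt orbC.
apply: leq_trans (prod_lb eG_sym _ _).
- by apply: leq_mul; [apply: IH; lia|apply: blk_mis].
- rewrite -setI_eq0; apply/eqP/setP => x; rewrite !inE.
  by apply/negP => /andP [h1 /eqP h2]; move: h1; rewrite h2 ltnn.
- move=> x y; rewrite !inE => hx /eqP hy; apply/negP => /eG_bid h.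
  by move: hx; rewrite h hy ltnn.
Qed.

Lemma U_all : U (nb0 + r) = setT.
Proof.
apply/setP => x; rewrite !inE.
case: (ltnP x sB) => h.
  by apply: leq_trans (bid_lt_sB h) (leq_addr _ _).
rewrite bid_ge_sB // ltn_add2l.
have hx := ltn_ord x; have hn2 := n_ge; lia.
Qed.

Lemma prod_val : \prod_(b < nb0 + r) lbv b = (if c5 then 5 else 3 ^ p) * 2 ^ r.
Proof.
rewrite -(big_mkord xpredT) (@big_cat_nat _ _ _ nb0) /=; [|by []|exact: leq_addr].
congr (_ * _).
  rewrite /nb0 /lbv; case: c5 => /=.
    by rewrite big_nat1.
  rewrite (eq_big_nat _ _ (F2 := fun _ => 3)); first by rewrite prod_nat_const_nat subn0.
  by move=> i /andP [_ ->].
rewrite (eq_big_nat _ _ (F2 := fun _ => 2)); first by rewrite prod_nat_const_nat addKn.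
move=> i /andP [h1 _]; rewrite /lbv; move: h1; rewrite /nb0; case: c5 => h1.
  by have -> : (i == 0) = false by apply/eqP; lia.
by rewrite ltnNge h1.
Qed.

Lemma tri_blk (A : {set 'I_n}) : triangle eG A -> exists b : 'I_p, A = Blk b.
Proof.
move=> /andP [/eqP cA /forallP hA].
have hadj : forall y z, y \in A -> z \in A -> y != z -> eG y z.
  move=> y z yA zA nyz; move: (hA y); rewrite yA /= => /forallP /(_ z).
  by rewrite zA nyz.
have [x xA] : exists x, x \in A by apply/set0Pn; rewrite -card_gt0 cA.
set b := bid x.
have AB : A \subset Blk b.
  apply/subsetP => y yA; rewrite inE; case: (eqVneq y x) => [->//|nyx].
  have hxy : x != y by rewrite eq_sym.
  by rewrite /b (eG_bid (hadj x y xA yA hxy)).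
case: (boolP (c5 && (b == 0))) => [/andP [hc hb]|hb].
  exfalso.
  have c2 : #|A :\ x| = 2 by move: cA; rewrite (cardsD1 x A) xA; lia.
  move/eqP/cards2P: c2 => [y [z [nyz hyz]]].
  have := memE y hyz; rewrite !inE eqxx /= => /andP [nyx yA].
  have := memE z hyz; rewrite !inE eqxx orbT /= => /andP [nzx zA].
  have l5 : forall w, w \in A -> w < 5.
    by move=> w wA; have := subsetP AB w wA; rewrite inE (eqP hb) bid_C5.
  have hxy := hadj x y xA yA (_ : x != y); rewrite eq_sym in hxy; have {hxy} := hxy nyx.
  rewrite adjC5 ?l5 // => /andP [v1 a1].
  have := hadj x z xA zA; rewrite eq_sym => /(_ nzx); rewrite adjC5 ?l5 // => /andP [v2 a2].
  have := hadj y z yA zA nyz; rewrite adjC5 ?l5 // => /andP [v3 a3].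
  by apply: (c5_notri (l5 x xA) (l5 y yA) (l5 z zA) v1 v2 v3 a1 a2 a3).
have hn' := n_ge.
case: (boolP (~~ c5 && (b < p))) => [/andP [hc bp]|hcb].
  exists (Ordinal bp); apply/eqP; rewrite eqEcard AB /=.
  rewrite cA; apply: (@card_vals_le [:: 3 * b; 3 * b + 1; 3 * b + 2]) => y.
  rewrite inE => /eqP hy; rewrite !inE (_ : \val y = nat_of_ord y) //.
  case: (ltnP y sB) => hyS.
    move: hy hyS; rewrite /bid /sB /nb0 (negbTE hc) => hy hyS; rewrite hyS in hy.
    lia.
  move: hy; rewrite bid_ge_sB // /nb0 (negbTE hc) => hy; lia.
exfalso.
have hge : nb0 <= b by move: hb hcb; rewrite /nb0; case: c5 => /=; lia.
have : #|Blk b| <= 2.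
  apply: (@card_vals_le [:: sB + 2 * (b - nb0); sB + 2 * (b - nb0) + 1]) => y.
  rewrite inE => /eqP hy; rewrite !inE (_ : \val y = nat_of_ord y) //.
  case: (ltnP y sB) => hyS.
    by have := bid_lt_sB hyS; rewrite hy; lia.
  move: hy; rewrite bid_ge_sB // => hy; lia.
have := subset_leq_card AB; rewrite cA => h1 h2; by move: (leq_trans h1 h2).
Qed.

Lemma nohas t : p <= t -> ~ has_induced_triangle_matching eG t.+1.
Proof.
move=> hpt [M [/andP [/forallP hM _] cM]].
have sub : M \subset [set Blk b | b : 'I_p].
  apply/subsetP => A AM; move: (hM A); rewrite AM /= => /tri_blk [b ->].
  by apply/imsetP; exists b.
have h2 : #|[set Blk b | b : 'I_p]| <= p.
  by apply: leq_trans (leq_imset_card _ _) _; rewrite card_ord.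
have := leq_trans (subset_leq_card sub) h2; rewrite cM; lia.
Qed.

End Con.


Lemma BB_val n t : 3 * t <= n -> (t = 0 -> 4 <= n) -> BB n t = mis_t_value n t.
Proof.
move=> h3 h4; rewrite B_reg; last by rewrite leq_divRL // mulnC.
rewrite /CB /mis_t_value.
case ho: (odd (n - 3 * t)) => //=.
case: t h3 h4 ho => [|t] h3 h4 ho //=.
have n4 := h4 erefl; move: ho; rewrite muln0 subn0 => ho.
rewrite gB_odd //; have := modn2 n; rewrite ho; lia.
Qed.

Lemma exist_gen n t p r c5 (hn : n = (if c5 then 5 else 3 * p) + 2 * r) :
  p <= t ->
  (forall e : rel 'I_n, simple_graph e -> ~ has_induced_triangle_matching e t.+1 ->
     mis e <= mis_t_value n t) ->
  (if c5 then 5 else 3 ^ p) * 2 ^ r = mis_t_value n t ->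
  exists e : rel 'I_n, simple_graph e /\
     ~ has_induced_triangle_matching e t.+1 /\ mis e = mis_t_value n t.
Proof.
move=> hpt UB hv; exists (eG p c5).
have hs : simple_graph (eG p c5) by split; [apply: eG_sym|apply: eG_irr].
have hnh := nohas hn hpt.
split => //; split => //.
apply/eqP; rewrite eqn_leq UB //=.
rewrite (mis_misV (eG_sym p c5) (@eG_irr n p c5)) -(U_all hn) -hv -(prod_val hn).
exact: (U_prod hn (leqnn _)).
Qed.

Unset Implicit Arguments.

Theorem mainTheorem1 (n t : nat) :
  1 <= n -> 3 * t <= n -> (t = 0 -> 4 <= n) ->
  (forall e : rel 'I_n, simple_graph e ->
     ~ has_induced_triangle_matching e t.+1 -> mis e <= mis_t_value n t)
  /\
  (exists e : rel 'I_n, simple_graph e /\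
     ~ has_induced_triangle_matching e t.+1 /\ mis e = mis_t_value n t).
Proof.
move=> h1 h3 h4.
have UB : forall e : rel 'I_n, simple_graph e ->
    ~ has_induced_triangle_matching e t.+1 -> mis e <= mis_t_value n t.
  move=> e [hs hi] hnot; rewrite (mis_misV hs hi) -BB_val //.
  apply: (ub hs hi (n := n)); first by rewrite cardsT card_ord.
  by move=> M hM _; apply/eqP => cM; apply: hnot; exists M.
split => //.
case: (boolP (odd (n - 3 * t))) => ho.
  case: t h3 h4 ho UB => [|t] h3 h4 ho UB.
    have n5 : 5 <= n by move: ho (h4 erefl); rewrite muln0 subn0; case: n {UB h1 h3 h4} => [|[|[|[|[|n]]]]].
    apply: (@exist_gen n 0 0 ((n - 5) %/ 2) true) => //.
      by move: ho; rewrite muln0 subn0 => ho; have := modn2 n; rewrite ho; lia.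
    by move: ho; rewrite /mis_t_value muln0 subn0 => ->.
  apply: (@exist_gen n t.+1 t ((n - 3 * t.+1 + 3) %/ 2) false) => //.
    by have := modn2 (n - 3 * t.+1); rewrite ho; lia.
  by rewrite /mis_t_value ho /= subn1.
apply: (@exist_gen n t t ((n - 3 * t) %/ 2) false) => //.
  by have := modn2 (n - 3 * t); rewrite (negbTE ho); lia.
by rewrite /mis_t_value ho.
Qed.
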